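(* Let $(\Omega,\mathcal{F},\mathbb{P})$ be a probability space, $L$ a Riesz space with $L^\infty\subset L\subset L^1$, and $\rho: L \to (-\infty,\infty]$ monotone, cash-invariant and positively homogeneous. Assume $\rho$ is not as conservative as the worst-case risk measure, i.e. there exists $X \in L$ with $\rho(X) < \mathrm{WC}(X) := \operatorname{ess\,sup}(-X)$. Then there exists a market $(S^0,S)$ on $(\Omega,\mathcal{F},\mathbb{P})$, satisfying the standing assumptions in the context and with returns in $L$, that does not admit arbitrage of the first kind but admits strong $\rho$-arbitrage.
   Context: A market: riskless asset with $S^0_0=1$, $S^0_1=1+r$, $r>-1$, and risky assets $S^1,\dots,S^d$ with constants $S^i_0>0$ and real-valued $\mathcal{F}$-measurable $S^i_1$; returns $R^i:=(S^i_1-S^i_0)/S^i_0$. Standing assumptions: nonredundancy (if $\theta\in\mathbb{R}^{1+d}$ with $\sum_{i=0}^d\theta^iS^i_t=0$ a.s. for $t\in\{0,1\}$ then $\theta=0$), $R^i\in L^1$, and $\mathbb{E}[R^i]\ne r$ for some $i$. Portfolio $\pi\in\mathbb{R}^d$ has excess return $X_\pi:=\pi\cdot(R-r\mathbf{1})$. Monotone: $X_1\le X_2$ a.s. implies $\rho(X_1)\ge\rho(X_2)$; cash-invariant: $\rho(X+c)=\rho(X)-c$; positively homogeneous: $\rho(\lambda X)=\lambda\rho(X)$ for $\lambda\ge 0$. Arbitrage of the first kind: a strategy $(\theta^0,\theta)\in\mathbb{R}^{1+d}$ with $\theta^0S^0_0+\theta\cdot S_0\le0$, $\theta^0S^0_1+\theta\cdot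 S_1\ge0$ a.s., and $\mathbb{P}[\theta^0S^0_1+\theta\cdot S_1>0]>0$. Strong $\rho$-arbitrage: for every $\pi\in\mathbb{R}^d$ there is $\pi'\in\mathbb{R}^d$ with $\mathbb{E}[X_{\pi'}]>\mathbb{E}[X_\pi]$ and $\rho(X_{\pi'})<\rho(X_\pi)$. *)

(* Defs.v *)
From HB Require Import structures.
From mathcomp Require Import all_boot all_order all_algebra.
From mathcomp Require Import all_classical all_reals all_analysis.
From mathcomp Require Import ess_sup_inf.
Set Implicit Arguments. Unset Strict Implicit. Unset Printing Implicit Defensive.
Import Order.TTheory GRing.Theory Num.Theory.
Local Open Scope classical_set_scope.
Local Open Scope ring_scope.

Section Defs.
Context (d : measure_display) (T : measurableType d) (R : realType)
        (P : probability T R).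

Definition Linfty (X : T -> R) : Prop :=
  measurable_fun setT X /\ exists c : R, {ae P, forall w, `|X w| <= c}.

Definition L1 (X : T -> R) : Prop := P.-integrable setT (EFin \o X).

Definition riesz_between (L : set (T -> R)) : Prop :=
  [/\ (forall X Y, L X -> L Y -> L (X \+ Y)),
      (forall (a : R) X, L X -> L (fun w => a * X w)),
      (forall X Y, L X -> L Y -> L (fun w => Num.max (X w) (Y w))),
      (forall X, Linfty X -> L X) &
      (forall X, L X -> L1 X)].

Definition rho_valued (L : set (T -> R)) (rho : (T -> R) -> \bar R) : Prop :=
  forall X, L X -> rho X != -oo%E.

Definition monotone_rho (L : set (T -> R)) (rho : (T -> R) -> \bar R) : Prop :=
  forall X1 X2, L X1 -> L X2 -> {ae P, forall w, X1 w <= X2 w} ->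
    (rho X2 <= rho X1)%E.

Definition cash_invariant (L : set (T -> R)) (rho : (T -> R) -> \bar R) : Prop :=
  forall X (c : R), L X -> rho (fun w => X w + c) = (rho X - c%:E)%E.

Definition pos_homogeneous (L : set (T -> R)) (rho : (T -> R) -> \bar R) : Prop :=
  forall X (lam : R), L X -> 0 <= lam -> rho (fun w => lam * X w) = (lam%:E * rho X)%E.

Definition WC (X : T -> R) : \bar R := ess_sup P (EFin \o (fun w => - X w)).

(* Market: riskless asset S^0_0 = 1, S^0_1 = 1 + r;
   risky assets S^i_0 = S0 i > 0, S^i_1 = S1 i (random). *)
Definition ret (n : nat) (S0 : 'I_n -> R) (S1 : 'I_n -> T -> R) (i : 'I_n) : T -> R :=
  fun w => (S1 i w - S0 i) / S0 i.

Definition excess_ret (n : nat) (r : R) (S0 : 'I_n -> R) (S1 : 'I_n -> T -> R)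
  (pi : 'I_n -> R) : T -> R :=
  fun w => \sum_(i < n) pi i * (ret S0 S1 i w - r).

Definition nonredundant (n : nat) (r : R) (S0 : 'I_n -> R) (S1 : 'I_n -> T -> R) : Prop :=
  forall (th0 : R) (th : 'I_n -> R),
    th0 * 1 + \sum_(i < n) th i * S0 i = 0 ->
    {ae P, forall w, th0 * (1 + r) + \sum_(i < n) th i * S1 i w = 0} ->
    th0 = 0 /\ (forall i, th i = 0).

Definition market (n : nat) (r : R) (S0 : 'I_n -> R) (S1 : 'I_n -> T -> R) : Prop :=
  [/\ -1 < r /\ (forall i, 0 < S0 i),
      (forall i, measurable_fun setT (S1 i)),
      nonredundant r S0 S1,
      (forall i, L1 (ret S0 S1 i)) &
      exists i, (\int[P]_w (ret S0 S1 i w)%:E != r%:E)%E].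

Definition arbitrage_first_kind (n : nat) (r : R) (S0 : 'I_n -> R)
  (S1 : 'I_n -> T -> R) : Prop :=
  exists (th0 : R) (th : 'I_n -> R),
    [/\ th0 * 1 + \sum_(i < n) th i * S0 i <= 0,
        {ae P, forall w, 0 <= th0 * (1 + r) + \sum_(i < n) th i * S1 i w} &
        (0 < P [set w | (0 < th0 * (1 + r) + \sum_(i < n) th i * S1 i w)%R])%E].

Definition strong_rho_arbitrage (rho : (T -> R) -> \bar R) (n : nat) (r : R)
  (S0 : 'I_n -> R) (S1 : 'I_n -> T -> R) : Prop :=
  forall pi : 'I_n -> R, exists pi' : 'I_n -> R,
    (\int[P]_w (excess_ret r S0 S1 pi w)%:E < \int[P]_w (excess_ret r S0 S1 pi' w)%:E)%E
    /\ (rho (excess_ret r S0 S1 pi') < rho (excess_ret r S0 S1 pi))%E.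

End Defs.

(* Main.v *)
Require Import Defs.
From HB Require Import structures.
From mathcomp Require Import all_boot all_order all_algebra.
From mathcomp Require Import all_classical all_reals all_analysis.
From mathcomp Require Import ess_sup_inf.
From mathcomp Require Import lra measurable_realfun.
Import Order.TTheory GRing.Theory Num.Theory.
Local Open Scope classical_set_scope.
Local Open Scope ring_scope.

Lemma mset_ge0 d (T : measurableType d) (R : realType) (f : T -> R) :
  measurable_fun setT f -> measurable [set w | 0 <= f w].
Proof.
move=> mf; have := mf measurableT _ (measurable_itv `[0%R, +oo[).
rewrite setTI; congr measurable; apply/seteqP; split => w /=;
  by rewrite in_itv /= andbT.
Qed.

Lemma mset_lt0 d (T : measurableType d) (R : realType) (f : T -> R) :
  measurable_fun setT f -> measurable [set w | f w < 0].
Proof.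
move=> mf; have := mf measurableT _ (measurable_itv `]-oo, 0%R[).
rewrite setTI; congr measurable; apply/seteqP; split => w /=;
  by rewrite in_itv /=.
Qed.

Lemma ae_pos_contra d (T : measurableType d) (R : realType)
  (P : probability T R) (Q : T -> Prop) (A : set T) :
  measurable A -> (0 < P A)%E -> {ae P, forall w, Q w} ->
  (forall w, A w -> ~ Q w) -> False.
Proof.
move=> mA PA [N [mN PN QN]] AQ.
have : (P A <= P N)%E.
  apply: le_measure; rewrite ?inE //.
  by move=> w Aw; apply: QN => /=; apply: AQ.
by rewrite PN leNgt PA.
Qed.

Theorem theorem3p23 (d : measure_display) (T : measurableType d) (R : realType)
  (P : probability T R) (L : set (T -> R)) (rho : (T -> R) -> \bar R) :
  riesz_between P L ->
  rho_valued L rho ->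
  monotone_rho P L rho ->
  cash_invariant L rho ->
  pos_homogeneous L rho ->
  (exists X, L X /\ (rho X < WC P X)%E) ->
  exists (n : nat) (r : R) (S0 : 'I_n -> R) (S1 : 'I_n -> T -> R),
    [/\ market P r S0 S1,
        (forall i, L (ret S0 S1 i)),
        ~ arbitrage_first_kind P r S0 S1 &
        strong_rho_arbitrage P rho r S0 S1].
Proof.
move=> [LD LZ Lmax Linf L1L] rhov mono cash homo [X [LX ltX]].
have mX : measurable_fun setT X.
  by have /integrableP[/measurable_EFinP] := L1L X LX.
have Lcst : forall c : R, L (fun _ => c).
  move=> c; apply: Linf; split; first exact: measurable_cst.
  by exists `|c|; apply: aeW => w.
case Erho: (rho X) ltX => [m| |] ltX; last 2 first.
- by move: ltX; rewrite ltNge leey.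
- by move: (rhov X LX); rewrite Erho.
have [y [my yW]] : exists y : R, m < y /\ (y%:E < WC P X)%E.
  move: ltX; case: (WC P X) => [w| |] //=.
  - rewrite lte_fin => mw; exists ((m + w) / 2).
    by rewrite lte_fin; split; lra.
  - by move=> _; exists (m + 1); split; [rewrite ltrDl|rewrite ltry].
set Y := fun w => X w + y.
have LY : L Y by exact: (LD X (fun _ => y) LX (Lcst y)).
have rhoY : rho Y = (m - y)%:E by rewrite /Y cash // Erho.
have mY : measurable_fun setT Y by apply: measurable_funD => //; exact: measurable_cst.
set B := [set w | 0 <= Y w].
set C := [set w | Y w < 0].
have mB : measurable B by exact: mset_ge0.
have mC : measurable C by exact: mset_lt0.
have PC : (0 < P C)%E.
  rewrite lt0e measure_ge0 andbT; apply/negP => /eqP PC0.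
  have : (WC P X <= y%:E)%E.
    apply/ess_supP; exists C; split => // w /= h; rewrite /C /Y /=.
    move: h; rewrite lee_fin; lra.
  by rewrite leNgt yW.
have PB : (0 < P B)%E.
  rewrite lt0e measure_ge0 andbT; apply/negP => /eqP PB0.
  have : (rho (fun w => (0 * X w)%R) <= rho Y)%E.
    apply: mono => //; first exact: LZ.
    exists B; split => // w /= h; rewrite /B /=.
    by move: h; rewrite mul0r => /negP; rewrite -ltNge => /ltW.
  by rewrite homo // mul0e rhoY lee_fin; lra.
have PBfin : P B \is a fin_num.
  by rewrite ge0_fin_numE ?measure_ge0 // (le_lt_trans (probability_le1 P mB)) ?ltry.
set pB := fine (P B).
have PBE : P B = pB%:E by rewrite fineK.
have pB0 : 0 < pB by rewrite -lte_fin -PBE.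
have intY := L1L Y LY.
set EY := fine (\int[P]_w (Y w)%:E).
have EYE : (\int[P]_w (Y w)%:E = EY%:E)%E by rewrite fineK //; exact: integrable_fin_num.
set c := (`|EY| + 1) / pB.
have c0 : 0 < c by rewrite divr_gt0 // ltr_pwDr.
set Z := fun w => c * (\1_B w : R).
have LZ' : L Z.
  apply: Linf; split.
    by apply: measurable_funM; [exact: measurable_cst|exact: measurable_indic].
  exists c; apply: aeW => w; rewrite /Z indicE.
  by case: (w \in B); rewrite ?mulr1 ?mulr0 ?normr0 ?gtr0_norm // ltW.
set Rr := Y \+ Z.
have LR : L Rr by exact: LD.
have mR : measurable_fun setT Rr.
  by have /integrableP[/measurable_EFinP] := L1L Rr LR.
have intZ := L1L Z LZ'.
have ZE : (\int[P]_w (Z w)%:E = (c * pB)%:E)%E.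
  rewrite (_ : (fun w => (Z w)%:E) = (fun w => c%:E * (\1_B w)%:E)%E); last first.
    by apply/funext => w; rewrite /Z EFinM.
  rewrite integralZl //; last first.
    exact: integrable_indic.
  rewrite integral_indic //.
  rewrite [X in (_ * X)%E](_ : _ = pB%:E) ?EFinM //; rewrite setIT; exact: PBE.
have intR := L1L Rr LR.
set ER := EY + c * pB.
have ERE : (\int[P]_w (Rr w)%:E = ER%:E)%E.
  rewrite (_ : (fun w => (Rr w)%:E) = ((fun w => (Y w)%:E) \+ (fun w => (Z w)%:E))%E); last first.
    by apply/funext => w; rewrite /Rr /= EFinD.
  by rewrite integralD // EYE ZE.
have ER0 : 0 < ER.
  rewrite /ER /c divfK ?gt_eqF //.
  have := ler_norm (- EY); rewrite normrN; lra.
have RB : forall w, B w -> 0 < Rr w.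
  move=> w Bw; rewrite /Rr /Z /= indicE mem_set // mulr1.
  by move: Bw; rewrite /B /=; lra.
have RC : forall w, C w -> Rr w < 0.
  move=> w Cw; rewrite /Rr /Z /= indicE memNset ?mulr0 ?addr0 //.
  by move: Cw; rewrite /B /C /=; lra.
have rhoRY : (rho Rr <= rho Y)%E.
  apply: mono => //; apply: aeW => w; rewrite /Rr /Z /= lerDl.
  by apply: mulr_ge0; [exact: ltW|rewrite indicE; case: (_ \in _)].
have [a [rhoRE a0]] : exists a : R, rho Rr = a%:E /\ a < 0.
  move: rhoRY (rhov Rr LR); rewrite rhoY; case: (rho Rr) => [a| |] //=.
  by rewrite lee_fin => h _; exists a; split => //; lra.
pose S0 := fun _ : 'I_1 => (1 : R).
pose S1 := fun (_ : 'I_1) w => 1 + Rr w.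
have retE : forall i, ret S0 S1 i = Rr.
  by move=> i; apply/funext => w; rewrite /ret /S0 /S1 divr1 (addrC 1) addrK.
have exE : forall pi, excess_ret 0 S0 S1 pi = (fun w => pi ord0 * Rr w).
  by move=> pi; apply/funext => w; rewrite /excess_ret big_ord1 retE subr0.
exists 1%N, 0, S0, S1; split.
- split.
  + by split => [|i]; [rewrite ltrN10|rewrite /S0 ltr01].
  + by move=> i; apply: measurable_funD => //; exact: measurable_cst.
  + move=> th0 th; rewrite big_ord1 /S0 /S1 mulr1 => h1 h2.
    have t0 : th ord0 = 0.
      have [//|tn0] := eqVneq (th ord0) 0; exfalso.
      apply: (@ae_pos_contra _ _ _ P _ B mB PB h2) => w /RB Rw.
      rewrite addr0 mulr1; have -> : th0 = - th ord0 by lra.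
      rewrite big_ord1 mulrDr mulr1 addrA addNr add0r; apply/eqP.
      by rewrite mulf_eq0 negb_or tn0 gt_eqF.
    by split; [lra|move=> i; rewrite (ord1 i)].
  + by move=> i; rewrite retE; exact: L1L.
  + by exists ord0; rewrite retE ERE eqe gt_eqF.
- by move=> i; rewrite retE.
- move=> [th0 [th [h1 h2 h3]]]; move: h1; rewrite big_ord1 /S0 mulr1 => h1.
  have [tn|tp|t0] := ltgtP (th ord0) 0.
  + apply: (@ae_pos_contra _ _ _ P _ B mB PB h2) => w /RB Rw.
    rewrite big_ord1 /S1 addr0 mulr1; nra.
  + apply: (@ae_pos_contra _ _ _ P _ C mC PC h2) => w /RC Rw.
    rewrite big_ord1 /S1 addr0 mulr1; nra.
  + move: h3; rewrite (_ : [set w | _] = set0) ?measure0 ?ltxx //.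
    apply/seteqP; split => w //=; rewrite big_ord1 t0 mul0r addr0 addr0 mulr1.
    by move: h1; rewrite t0 mul0r addr0; lra.
- move=> pi; set p := pi ord0.
  have intE : forall q, (\int[P]_w ((q * Rr w)%:E) = (q * ER)%:E)%E.
    move=> q; rewrite (_ : (fun w => _) = (fun w => q%:E * (Rr w)%:E)%E); last first.
      by apply/funext=> w; rewrite EFinM.
    by rewrite integralZl // ERE -EFinM.
  have [p0|p0] := leP 0 p.
  + exists (fun _ => p + 1); rewrite !exE -/p !intE lte_fin; split; first nra.
    rewrite !homo ?rhoRE -?EFinM ?lte_fin //; [nra|lra].
  + have LN : L (fun w => -1 * Rr w) by exact: LZ.
    have rpE : rho (fun w => p * Rr w) = ((-p)%:E * rho (fun w => (-1 * Rr w)%R))%E.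
      rewrite -homo //; last by lra.
      by congr rho; apply/funext => w; rewrite mulN1r mulrNN.
    case Ev: (rho (fun w => -1 * Rr w)) rpE (rhov _ LN) => [v| |] rpE hv //.
    * set k := ((-p) * `|v| + 1) / (-a).
      have k0 : 0 < k by rewrite /k divr_gt0 //; [rewrite ltr_pwDr // mulr_ge0 //; lra|lra].
      exists (fun _ => k); rewrite !exE -/p !intE lte_fin /=; split; first nra.
      rewrite homo ?rhoRE ?rpE -?EFinM ?lte_fin //; last by lra.
      have ka : k * a = - ((-p) * `|v| + 1).
        rewrite /k mulrAC -mulrA invrN mulrN divrr ?mulrN1 //.
        by rewrite unitfE ltr0_neq0.
      rewrite ka; have := ler_norm (- v); rewrite normrN => hv'; nra.
    * exists (fun _ => 1); rewrite !exE -/p !intE lte_fin /=; split; first nra.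
      rewrite homo // rhoRE rpE gt0_muley; last by rewrite lte_fin; lra.
      by rewrite -EFinM ltry.
Qed.
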